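(* The ideal $\mathfrak m$ of $A$ is stable under the action of $\mathfrak h\subset\mathfrak q\times\mathfrak q$.
   Context: Fix $\zeta\in\mathbb{C}$ with $\zeta^2=-1$. Let $\mathbf{V}=\mathbb{C}^{\infty|\infty}$ with even basis $\{e_i\}$, odd basis $\{f_i\}$, odd involution $\alpha(e_i)=f_i,\alpha(f_i)=e_i$. $\mathfrak q$ is the infinite queer Lie superalgebra of finitary matrices $\begin{pmatrix} a & b\\ -b & a\end{pmatrix}$ acting on $\mathbf V$ (basis order: $e$'s then $f$'s), and $\mathfrak q\times\mathfrak q$ acts on $\mathbf V\otimes\mathbf V$ with Koszul signs. $\mathbf U$ is the $\zeta$-eigenspace of $\alpha\otimes\alpha$ on $\mathbf V\otimes\mathbf V$, stable under $\mathfrak q\times\mathfrak q$, with basis $v_{i,j}=(1+\zeta)e_i\otimes e_j+(1-\zeta)f_i\otimes f_j$ and $w_{i,j}=(1+\zeta)e_i\otimes f_j+(1-\zeta)f_i\otimes e_j$. $A=\mathrm{Sym}(\mathbf U)$ is the polynomial superalgebra in even $x_{i,j}$ and odd $y_{i,j}$ corresponding to $v_{i,j},w_{i,j}$, with $\mathfrak q\times\mathfrak q$ acting by superderivations extending its action on $\mathbf U$. $\mathfrak m$ is the ideal generated by all $x_{i,j}-\delta_{i,j}$ and $y_{i,j}$. The Chevalley automorphism is $\tau\begin{pmatrix} a & b\\ -b & a\end{pmatrix}=-\begin{pmatrix} a^t & \zeta b^t\\ -\zeta b^t & a^t\end{pmatrix}$, and $\mathfrak h=\{(\tau g,g):g\in\mathfrak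 q\}$. *)

(* Defs.v *)
From mathcomp Require Import all_boot all_algebra.
From mathcomp Require Import reals.
From Stdlib Require Lists.List.
From mathcomp.real_closed Require Import complex.

Set Implicit Arguments.
Unset Strict Implicit.
Unset Printing Implicit Defensive.
Import GRing.Theory.
Local Open Scope ring_scope.

Section QueerSym.
Variable R : realType.
Local Notation C := (R[i]).

(* The queer Lie superalgebra q of finitary matrices [[a, b], [-b, a]] *)

Definition finitary (a : nat -> nat -> C) : Prop :=
  exists N : nat, forall i j, (N <= i)%N || (N <= j)%N -> a i j = 0.

(* an element of q is encoded by the pair (a, b) of its blocks *)
Definition qelt := ((nat -> nat -> C) * (nat -> nat -> C))%type.

(* basis of V = C^{oo|oo}: (false, i) is e_i (even), (true, i) is f_i (odd);
   basis order e's then f's *)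
Definition vidx := (bool * nat)%type.

(* matrix entry in row u', column u of [[a, b], [-b, a]]:
   g (basis u) = sum_{u'} qM g u' u (basis u') *)
Definition qM (g : qelt) (u' u : vidx) : C :=
  match u'.1, u.1 with
  | false, false => g.1 u'.2 u.2
  | false, true  => g.2 u'.2 u.2
  | true,  false => - g.2 u'.2 u.2
  | true,  true  => g.1 u'.2 u.2
  end.

Definition qeven (g : qelt) : qelt := (g.1, fun _ _ => 0).
Definition qodd (g : qelt) : qelt := (fun _ _ => 0, g.2).

Definition tau (zeta : C) (g : qelt) : qelt :=
  (fun i j => - g.1 j i, fun i j => - (zeta * g.2 j i)).

Definition tens := (vidx * vidx -> C)%type.

(* coefficient at u' (x) v' of (g1, g2) . (u (x) v), where
   (g1,g2).(u (x) v) = g1 u (x) v + (-1)^{|g2||u|} u (x) g2 v,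
   linearised over the homogeneous matrix units of g2 (the unit E_{v',v}
   has parity v'.1 xor v.1). *)
Definition actB (g1 g2 : qelt) (uv : vidx * vidx) (uv' : vidx * vidx) : C :=
  (uv'.2 == uv.2)%:R * qM g1 uv'.1 uv.1
  + (uv'.1 == uv.1)%:R * (-1) ^+ (uv.1.1 && (uv'.2.1 != uv.2.1))
      * qM g2 uv'.2 uv.2.

(* (g1,g2) . v_{k,l}  where v_{k,l} = (1+zeta) e_k(x)e_l + (1-zeta) f_k(x)f_l *)
Definition actV (zeta : C) (g1 g2 : qelt) (k l : nat) : tens :=
  fun uv' => (1 + zeta) * actB g1 g2 ((false, k), (false, l)) uv'
           + (1 - zeta) * actB g1 g2 ((true, k), (true, l)) uv'.

(* (g1,g2) . w_{k,l}  where w_{k,l} = (1+zeta) e_k(x)f_l + (1-zeta) f_k(x)e_l *)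
Definition actW (zeta : C) (g1 g2 : qelt) (k l : nat) : tens :=
  fun uv' => (1 + zeta) * actB g1 g2 ((false, k), (true, l)) uv'
           + (1 - zeta) * actB g1 g2 ((true, k), (false, l)) uv'.

Definition pidx := (nat * nat)%type.
Definition lexle (a b : pidx) : bool := (a.1 < b.1)%N || ((a.1 == b.1) && (a.2 <= b.2)%N).
Definition lexlt (a b : pidx) : bool := (a.1 < b.1)%N || ((a.1 == b.1) && (a.2 < b.2)%N).

(* a super monomial x^E y_O: E is a multiset of indices of even variables
   (nondecreasing list), O a set of indices of odd variables (increasing list);
   the monomial is x_{E_1} ... x_{E_r} y_{O_1} ... y_{O_s}. *)
Definition smon := (seq pidx * seq pidx)%type.
Definition canon (m : smon) : bool := sorted lexle m.1 && sorted lexlt m.2.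

Definition Alg := (smon -> C)%type.

Definition wf (f : Alg) : Prop :=
  (forall m, ~~ canon m -> f m = 0) /\
  exists s : seq smon, forall m, f m != 0 -> m \in s.

Definition homog (p : bool) (f : Alg) : Prop :=
  forall m, f m != 0 -> odd (size m.2) = p.

Definition sym_zero : Alg := fun _ => 0.
Definition sym_add (f g : Alg) : Alg := fun m => f m + g m.
Definition sym_scale (c : C) (f : Alg) : Alg := fun m => c * f m.
Definition sym_one : Alg := fun m => (m == ([::], [::]))%:R.
Definition X (k l : nat) : Alg := fun m => (m == ([:: (k, l)], [::]))%:R.
Definition Y (k l : nat) : Alg := fun m => (m == ([::], [:: (k, l)]))%:R.

Fixpoint allmasks (n : nat) : seq bitseq :=
  if n is n'.+1 then [seq b :: s | b <- [:: true; false], s <- allmasks n']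
  else [:: [::]].

Fixpoint ninv (mu : bitseq) : nat :=
  if mu is x :: mu' then ((if x then 0 else count id mu') + ninv mu')%N else 0%N.

Definition evsplits (E : seq pidx) : seq (seq pidx * seq pidx) :=
  undup [seq (mask mu E, mask (map negb mu) E) | mu <- allmasks (size E)].

(* supercommutative product:
   (x^E1 y_O1)(x^E2 y_O2) = x^(E1+E2) y_O1 y_O2, and
   y_O1 y_O2 = (-1)^{#{(a,b) in O1 x O2 | b < a}} y_(O1 u O2) (0 if O1, O2 meet) *)
Definition sym_mul (f g : Alg) : Alg := fun m =>
  if canon m then
    \sum_(sp <- evsplits m.1) \sum_(mu <- allmasks (size m.2))
       (-1) ^+ ninv mu * f (sp.1, mask mu m.2) * g (sp.2, mask (map negb mu) m.2)
  else 0.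

Definition sym_sum (s : seq Alg) : Alg := foldr sym_add sym_zero s.

Definition mgen (g : Alg) : Prop :=
  (exists k l, g = sym_add (X k l) (sym_scale (- (k == l)%:R) sym_one)) \/
  (exists k l, g = Y k l).

Definition in_m (f : Alg) : Prop :=
  exists s : seq (Alg * Alg),
    Stdlib.Lists.List.Forall (fun c : Alg * Alg => wf c.1 /\ mgen c.2) s /\ f = sym_sum [seq sym_mul c.1 c.2 | c <- s].

Definition superder (p : bool) (D : Alg -> Alg) : Prop :=
  (forall f, wf f -> wf (D f)) /\
  (forall f g, wf f -> wf g -> D (sym_add f g) = sym_add (D f) (D g)) /\
  (forall c f, wf f -> D (sym_scale c f) = sym_scale c (D f)) /\
  (forall q f g, wf f -> wf g -> homog q f ->
     D (sym_mul f g) = sym_add (sym_mul (D f) g) (sym_scale ((-1) ^+ (p && q)) (sym_mul f (D g)))).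

(* identification U ~ degree one part of A: an element t of U, written
   sum c_{kl} v_{kl} + d_{kl} w_{kl}, is sent to sum c_{kl} x_{kl} + d_{kl} y_{kl};
   here c_{kl} = (coefficient of e_k (x) e_l in t) / (1 + zeta) and
   d_{kl} = (coefficient of e_k (x) f_l in t) / (1 + zeta). *)
Definition iotaU (zeta : C) (t : tens) : Alg := fun m =>
  match m with
  | ([:: kl], [::]) => t ((false, kl.1), (false, kl.2)) / (1 + zeta)
  | ([::], [:: kl]) => t ((false, kl.1), (true, kl.2)) / (1 + zeta)
  | _ => 0
  end.

Definition extends_on_U (zeta : C) (g1 g2 : qelt) (D : Alg -> Alg) : Prop :=
  forall k l, D (X k l) = iotaU zeta (actV zeta g1 g2 k l) /\
              D (Y k l) = iotaU zeta (actW zeta g1 g2 k l).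

End QueerSym.

(* Main.v *)
Require Import Defs.
From mathcomp Require Import all_boot all_algebra.
From mathcomp Require Import reals.
From mathcomp.real_closed Require Import complex.
From mathcomp Require Import zify ring.
From Stdlib Require Import FunctionalExtensionality.
From Stdlib Require Lists.List.
Import GRing.Theory.
Local Open Scope ring_scope.
Set Implicit Arguments.
Unset Strict Implicit.

Section Helpers.
Variable R : realType.
Local Notation C := (R[i]).
Local Notation Alg := (Alg R).
Local Notation sym_add := (@sym_add R).
Local Notation sym_zero := (@sym_zero R).
Local Notation sym_scale := (@sym_scale R).
Local Notation sym_mul := (@sym_mul R).
Local Notation sym_one := (@sym_one R).
Local Notation sym_sum := (@sym_sum R).
Local Notation wf := (@wf R).
Local Notation in_m := (@in_m R).
Local Notation mgen := (@mgen R).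

Lemma add0s f : sym_add sym_zero f = f.
Proof. by apply: functional_extensionality => m; rewrite /sym_add /sym_zero add0r. Qed.
Lemma adds0 f : sym_add f sym_zero = f.
Proof. by apply: functional_extensionality => m; rewrite /sym_add /sym_zero addr0. Qed.
Lemma addsA f g h : sym_add f (sym_add g h) = sym_add (sym_add f g) h.
Proof. by apply: functional_extensionality => m; rewrite /sym_add addrA. Qed.

Lemma sym_sum_cat s1 s2 : sym_sum (s1 ++ s2) = sym_add (sym_sum s1) (sym_sum s2).
Proof. elim: s1 => [|x s IH] /=; first by rewrite add0s. by rewrite IH addsA. Qed.

Lemma sym_sum_eval s m : sym_sum s m = \sum_(x <- s) x m.
Proof. elim: s => [|x s IH] /=; first by rewrite big_nil. by rewrite big_cons /sym_add IH. Qed.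

Lemma Forall_cat (T : Type) (P : T -> Prop) (s1 s2 : seq T) :
  List.Forall P s1 -> List.Forall P s2 -> List.Forall P (s1 ++ s2).
Proof. elim: s1 => [|x s IH] //= H1 H2; inversion H1; constructor; auto. Qed.

Lemma Forall_mapP (T U : Type) (P : U -> Prop) (f : T -> U) (s : seq T) :
  (forall x, P (f x)) -> List.Forall P (map f s).
Proof. move=> H; elim: s => [|x s IH] /=; constructor; auto. Qed.

Lemma wf_zero : wf sym_zero.
Proof. split => //; by exists [::] => m; rewrite /sym_zero eqxx. Qed.

Lemma wf_add f g : wf f -> wf g -> wf (sym_add f g).
Proof.
move=> [c1 [s1 h1]] [c2 [s2 h2]]; split.
  by move=> m hm; rewrite /sym_add c1 // c2 // addr0.
exists (s1 ++ s2) => m; rewrite /sym_add mem_cat.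
case: (boolP (f m == 0)) => [/eqP -> | /h1 -> //]; rewrite add0r => /h2 ->; by rewrite orbT.
Qed.

Lemma wf_scale c f : wf f -> wf (sym_scale c f).
Proof.
move=> [c1 [s1 h1]]; split; first by move=> m hm; rewrite /sym_scale c1 // mulr0.
exists s1 => m; rewrite /sym_scale => hm; apply: h1; apply: contraNneq hm => ->; by rewrite mulr0.
Qed.

Lemma wf_sum s : List.Forall wf s -> wf (sym_sum s).
Proof. elim: s => [|x s IH] /= H; first exact: wf_zero. inversion H; apply: wf_add; auto. Qed.

Lemma wf_one : wf sym_one.
Proof.
split. move=> m; rewrite /sym_one; by case: eqP => [->|].
exists [:: ([::], [::])] => m; rewrite /sym_one; case E: (m == _); first by rewrite (eqP E) inE.
by rewrite eqxx.
Qed.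

Lemma wf_X k l : wf (X R k l).
Proof.
split. move=> m; rewrite /X; by case: eqP => [->|].
exists [:: ([:: (k,l)], [::])] => m; rewrite /X; case E: (m == _); first by rewrite (eqP E) inE.
by rewrite eqxx.
Qed.

Lemma wf_Y k l : wf (Y R k l).
Proof.
split. move=> m; rewrite /Y; by case: eqP => [->|].
exists [:: ([::], [:: (k,l)])] => m; rewrite /Y; case E: (m == _); first by rewrite (eqP E) inE.
by rewrite eqxx.
Qed.

Lemma wf_gen g : mgen g -> wf g.
Proof.
case=> [[k [l ->]]|[k [l ->]]]; last exact: wf_Y.
apply: wf_add; [exact: wf_X | apply: wf_scale; exact: wf_one].
Qed.


Lemma mul_add_r f g1 g2 : sym_mul f (sym_add g1 g2) = sym_add (sym_mul f g1) (sym_mul f g2).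
Proof.
apply: functional_extensionality => m; rewrite /sym_mul /sym_add.
case: (canon m); last by rewrite addr0.
rewrite -big_split; apply: eq_bigr => sp _; rewrite -big_split; apply: eq_bigr => mu _.
by rewrite mulrDr.
Qed.

Lemma mul_add_l f1 f2 g : sym_mul (sym_add f1 f2) g = sym_add (sym_mul f1 g) (sym_mul f2 g).
Proof.
apply: functional_extensionality => m; rewrite /sym_mul /sym_add.
case: (canon m); last by rewrite addr0.
rewrite -big_split; apply: eq_bigr => sp _; rewrite -big_split; apply: eq_bigr => mu _.
by rewrite mulrDr mulrDl.
Qed.

Lemma mul_zero_r f : sym_mul f sym_zero = sym_zero.
Proof.
apply: functional_extensionality => m; rewrite /sym_mul /sym_zero.
case: (canon m) => //; apply: big1 => sp _; apply: big1 => mu _; by rewrite mulr0.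
Qed.

Lemma mul_scale_r f c g : sym_mul f (sym_scale c g) = sym_mul (sym_scale c f) g.
Proof.
apply: functional_extensionality => m; rewrite /sym_mul /sym_scale.
case: (canon m) => //; apply: eq_bigr => sp _; apply: eq_bigr => mu _.
by rewrite mulrCA !mulrA [c * _]mulrC.
Qed.

Lemma scale_mul c f g : sym_scale c (sym_mul f g) = sym_mul (sym_scale c f) g.
Proof.
apply: functional_extensionality => m; rewrite /sym_mul /sym_scale.
case: (canon m); last by rewrite mulr0.
rewrite mulr_sumr; apply: eq_bigr => sp _; rewrite mulr_sumr; apply: eq_bigr => mu _.
by rewrite !mulrA [c * _]mulrC.
Qed.

Lemma scale_add c f g : sym_scale c (sym_add f g) = sym_add (sym_scale c f) (sym_scale c g).
Proof. by apply: functional_extensionality => m; rewrite /sym_scale /sym_add mulrDr. Qed.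

Lemma scale_zero c : sym_scale c sym_zero = sym_zero.
Proof. by apply: functional_extensionality => m; rewrite /sym_scale /sym_zero mulr0. Qed.

Lemma in_m_zero : in_m sym_zero.
Proof. by exists [::]. Qed.

Lemma in_m_add f g : in_m f -> in_m g -> in_m (sym_add f g).
Proof.
move=> [s1 [h1 ->]] [s2 [h2 ->]]; exists (s1 ++ s2); split; first exact: Forall_cat.
by rewrite map_cat sym_sum_cat.
Qed.

Lemma in_m_term c g : wf c -> mgen g -> in_m (sym_mul c g).
Proof.
move=> hc hg; exists [:: (c, g)]; split; first by constructor.
by rewrite /= adds0.
Qed.

Lemma in_m_scale c f : in_m f -> in_m (sym_scale c f).
Proof.
move=> [s [h ->]]; elim: s h => [|x s IH] h /=; first by rewrite scale_zero; exact: in_m_zero.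
inversion h; subst; rewrite scale_add; apply: in_m_add; last exact: IH.
rewrite scale_mul; apply: in_m_term; [apply: wf_scale|]; tauto.
Qed.

Definition lin_m (G : Alg) : Prop :=
  exists L : seq (C * Alg), List.Forall (fun x => mgen x.2) L /\
     G = sym_sum [seq sym_scale x.1 x.2 | x <- L].

Lemma in_m_mul_lin h G : wf h -> lin_m G -> in_m (sym_mul h G).
Proof.
move=> hh [L [hL ->]]; elim: L hL => [|x L IH] hL /=.
  rewrite mul_zero_r; exact: in_m_zero.
inversion hL; subst; rewrite mul_add_r; apply: in_m_add; last exact: IH.
rewrite mul_scale_r; apply: in_m_term => //; exact: wf_scale.
Qed.


Lemma allmasksS n : allmasks n.+1 = map (cons true) (allmasks n) ++ map (cons false) (allmasks n).
Proof. by rewrite /= cats0. Qed.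

Lemma size_allmasks n mu : mu \in allmasks n -> size mu = n.
Proof.
elim: n mu => [|n IH] mu /=; first by rewrite inE => /eqP ->.
rewrite cats0 mem_cat => /orP [] /mapP [s hs ->] /=; by rewrite IH.
Qed.

Lemma nseq_allmasks n b : nseq n b \in allmasks n.
Proof.
elim: n => [|n IH]; first by rewrite inE.
rewrite allmasksS mem_cat; case: b IH => IH /=; [rewrite (map_f (cons true)) // | rewrite (map_f (cons false)) ?orbT //].
Qed.

Lemma uniq_allmasks n : uniq (allmasks n).
Proof.
elim: n => [|n IH] //; rewrite allmasksS cat_uniq !map_inj_uniq //; try by move=> x y [].
rewrite IH /= andbT; apply/hasPn => x /mapP [s _ ->]; apply/mapP => [[t _]] //.
Qed.

Lemma mask_negb_nil (T : Type) (s : seq T) mu :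
  size mu = size s -> mask (map negb mu) s = [::] -> mu = nseq (size s) true.
Proof.
elim: s mu => [|x s IH] [|b mu] //= [hs]; case: b => //= h; by rewrite (IH _ hs h).
Qed.

Lemma mask_nil (T : Type) (s : seq T) mu :
  size mu = size s -> mask mu s = [::] -> mu = nseq (size s) false.
Proof.
elim: s mu => [|x s IH] [|b mu] //= [hs]; case: b => //= h; by rewrite (IH _ hs h).
Qed.

Lemma ninv_true n : ninv (nseq n true) = 0%N.
Proof. by elim: n. Qed.

Lemma ninv_false n : ninv (nseq n false) = 0%N.
Proof. elim: n => //= n ->; by rewrite count_nseq /= mul0n. Qed.

Lemma sum_single (T : eqType) (r : seq T) (x : T) (F : T -> C) :
  uniq r -> x \in r -> (forall y, y \in r -> y != x -> F y = 0) ->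
  \sum_(y <- r) F y = F x.
Proof.
move=> hu hx hF; rewrite (bigD1_seq x) //= big1_seq ?addr0 //.
by move=> y /andP [hy hr]; apply: hF.
Qed.

Lemma evsplits_mem (E : seq pidx) sp : sp \in evsplits E ->
  exists nu, size nu = size E /\ sp = (mask nu E, mask (map negb nu) E).
Proof.
rewrite /evsplits mem_undup => /mapP [nu hnu ->]; exists nu; split => //.
exact: size_allmasks hnu.
Qed.

Lemma evsplits_full (E : seq pidx) : (E, [::]) \in evsplits E.
Proof.
rewrite /evsplits mem_undup; apply/mapP; exists (nseq (size E) true); first exact: nseq_allmasks.
by rewrite mask_true // map_nseq mask_false.
Qed.

Lemma evsplits_empty (E : seq pidx) : ([::], E) \in evsplits E.
Proof.
rewrite /evsplits mem_undup; apply/mapP; exists (nseq (size E) false); first exact: nseq_allmasks.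
by rewrite mask_false map_nseq mask_true.
Qed.

Lemma mul_one_r h : wf h -> sym_mul h sym_one = h.
Proof.
move=> [hc _]; apply: functional_extensionality => -[E O]; rewrite /sym_mul /=.
case: (boolP (canon (E, O))) => hcan; last by rewrite hc.
rewrite (@sum_single _ _ (E, [::])) ?undup_uniq ?evsplits_full //=; last first.
  move=> y /evsplits_mem [nu [hnu ->]] hne; apply: big1_seq => mu _.
  rewrite /sym_one xpair_eqE /=.
  case: (boolP (mask (map negb nu) E == [::])) => [/eqP h0|hn] /=; last by rewrite mulr0.
  by move: hne; rewrite (mask_negb_nil hnu h0) mask_true // map_nseq mask_false eqxx.
rewrite (@sum_single _ _ (nseq (size O) true)) ?uniq_allmasks ?nseq_allmasks //; last first.
  move=> mu hmu hne; rewrite /sym_one xpair_eqE /= .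
  case: (boolP (mask (map negb mu) O == [::])) => [/eqP h0|hn] /=; last by rewrite mulr0.
  by move: hne; rewrite (mask_negb_nil (size_allmasks hmu) h0) eqxx.
by rewrite ninv_true mask_true // map_nseq mask_false /sym_one eqxx expr0 mul1r mulr1.
Qed.

Lemma mul_one_l h : wf h -> sym_mul sym_one h = h.
Proof.
move=> [hc _]; apply: functional_extensionality => -[E O]; rewrite /sym_mul /=.
case: (boolP (canon (E, O))) => hcan; last by rewrite hc.
rewrite (@sum_single _ _ ([::], E)) ?undup_uniq ?evsplits_empty //=; last first.
  move=> y /evsplits_mem [nu [hnu ->]] hne; apply: big1_seq => mu _.
  rewrite /sym_one xpair_eqE /=.
  case: (boolP (mask nu E == [::])) => [/eqP h0|hn] /=; last by rewrite mulr0 mul0r.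
  by move: hne; rewrite (mask_nil hnu h0) mask_false map_nseq mask_true // eqxx.
rewrite (@sum_single _ _ (nseq (size O) false)) ?uniq_allmasks ?nseq_allmasks //; last first.
  move=> mu hmu hne; rewrite /sym_one xpair_eqE /= .
  case: (boolP (mask mu O == [::])) => [/eqP h0|hn] /=; last by rewrite mulr0 mul0r.
  by move: hne; rewrite (mask_nil (size_allmasks hmu) h0) eqxx.
by rewrite ninv_false mask_false map_nseq mask_true // /sym_one eqxx expr0 !mul1r.
Qed.


Lemma lexle_total : total lexle.
Proof. move=> [a1 a2] [b1 b2]; rewrite /lexle /=; lia. Qed.
Lemma lexle_trans : transitive lexle.
Proof. move=> [a1 a2] [b1 b2] [c1 c2]; rewrite /lexle /=; lia. Qed.
Lemma lexle_anti : antisymmetric lexle.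
Proof. move=> [a1 a2] [b1 b2]; rewrite /lexle /= => h; apply/eqP; rewrite xpair_eqE; lia. Qed.
Lemma lexlt_le : subrel lexlt lexle.
Proof. move=> [a1 a2] [b1 b2]; rewrite /lexle /lexlt /=; lia. Qed.

Lemma perm_mask (E : seq pidx) nu : size nu = size E ->
  perm_eq E (mask nu E ++ mask (map negb nu) E).
Proof.
elim: E nu => [|x E IH] [|b nu] //= [hs]; case: b => /=; first by rewrite perm_cons IH.
rewrite perm_sym -[_ ++ x :: _]/(_ ++ [:: x] ++ _) perm_catCA /= perm_cons perm_sym; exact: IH.
Qed.

Lemma sum_nz (T : eqType) (r : seq T) (F : T -> C) :
  \sum_(x <- r) F x != 0 -> exists2 x, x \in r & F x != 0.
Proof.
move=> h; case: (boolP (has (fun x => F x != 0) r)) => [/hasP [x hx hF]|/hasPn hn]; first by exists x.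
move: h; rewrite big1_seq ?eqxx // => x /andP [_ hx]; move: (hn x hx); by rewrite negbK => /eqP.
Qed.

Lemma wf_mul f g : wf f -> wf g -> wf (sym_mul f g).
Proof.
move=> [_ [sf hf]] [_ [sg hg]]; split; first by move=> m /negbTE hm; rewrite /sym_mul hm.
exists [seq (sort lexle (x.1 ++ y.1), sort lexle (x.2 ++ y.2)) | x <- sf, y <- sg].
move=> [E O]; rewrite /sym_mul /=; case: (boolP (canon (E, O))) => hcan; last by rewrite eqxx.
move/sum_nz => [sp hsp /sum_nz [mu hmu hne]].
have hf0 : f (sp.1, mask mu O) != 0 by apply: contraNneq hne => ->; rewrite mulr0 mul0r.
have hg0 : g (sp.2, mask (map negb mu) O) != 0 by apply: contraNneq hne => ->; rewrite mulr0.
apply/allpairsP; exists ((sp.1, mask mu O), (sp.2, mask (map negb mu) O)); split.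
- exact: hf.
- exact: hg.
move: hcan; rewrite /canon /= => /andP [hE hO].
have hO' : sorted lexle O by apply: sub_sorted hO; exact: lexlt_le.
move: hsp => /evsplits_mem [nu [hnu ->]] /=.
congr (_, _).
  rewrite -{1}(sorted_sort lexle_trans hE); apply/perm_sortP; [exact: lexle_total|exact: lexle_trans|exact: lexle_anti|].
  exact: perm_mask.
rewrite -{1}(sorted_sort lexle_trans hO'); apply/perm_sortP; [exact: lexle_total|exact: lexle_trans|exact: lexle_anti|].
apply: perm_mask; exact: size_allmasks hmu.
Qed.


Lemma homog_split c : wf c -> exists ce co,
  [/\ wf ce, wf co, homog false ce, homog true co & c = sym_add ce co].
Proof.
move=> [hc [sc hs]].
exists (fun m => if odd (size m.2) then 0 else c m), (fun m => if odd (size m.2) then c m else 0).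
split.
- split; first by move=> m hm; rewrite hc ?if_same.
  exists sc => m; case: ifP => _; [by rewrite eqxx | exact: hs].
- split; first by move=> m hm; rewrite hc ?if_same.
  exists sc => m; case: ifP => _; [exact: hs | by rewrite eqxx].
- by move=> m; case: ifP => //; rewrite eqxx.
- by move=> m; case: ifP => //; rewrite eqxx.
- apply: functional_extensionality => m; rewrite /sym_add; case: ifP => _; by rewrite ?add0r ?addr0.
Qed.

Section Der.
Variable p : bool.
Variable D : Alg -> Alg.
Hypothesis hD : superder p D.

Lemma D_zero : D sym_zero = sym_zero.
Proof.
case: hD => _ [_ [hs _]].
rewrite -{1}(scale_zero 0) hs; last exact: wf_zero.
by apply: functional_extensionality => m; rewrite /sym_scale mul0r.
Qed.

Lemma D_sum L : List.Forall wf L -> D (sym_sum L) = sym_sum (map D L).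
Proof.
case: hD => _ [ha _]; elim: L => [|x L IH] /= h; first exact: D_zero.
inversion h; subst; rewrite ha //; first by rewrite IH.
exact: wf_sum.
Qed.

Lemma D_one : D sym_one = sym_zero.
Proof.
case: hD => hw [_ [_ hm]].
have h1 := hm false sym_one sym_one wf_one wf_one.
have hh : homog false sym_one.
  move=> m; rewrite /sym_one; case E: (m == _); first by rewrite (eqP E). by rewrite eqxx.
have w1 : wf sym_one := wf_one; have wD := hw _ w1.
move: (h1 hh); rewrite (mul_one_r w1) (mul_one_r wD) (mul_one_l wD).
rewrite andbF expr0 => e; apply: functional_extensionality => m.
have := congr1 (fun F => F m) e; rewrite /sym_add /sym_scale /sym_zero mul1r => e2.
have := congr1 (fun y => y - D sym_one m) e2; by rewrite subrr addrK.
Qed.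

Lemma lin_gen : (forall k l, lin_m (D (X R k l))) -> (forall k l, lin_m (D (Y R k l))) ->
  forall g, mgen g -> lin_m (D g).
Proof.
case: hD => hw [ha [hs _]] hX hY g [[k [l ->]]|[k [l ->]]]; last exact: hY.
rewrite ha; [|exact: wf_X|apply: wf_scale; exact: wf_one].
rewrite hs; last exact: wf_one.
by rewrite D_one scale_zero adds0.
Qed.

Hypothesis hgen : forall g, mgen g -> lin_m (D g).

Lemma D_term c g : wf c -> mgen g -> in_m (D (sym_mul c g)).
Proof.
move=> hc hg; have [ce [co [hce hco he ho ->]]] := homog_split hc.
have wg := wf_gen hg.
case: hD => hw [ha [hs hm]]; rewrite mul_add_l ha; [|exact: wf_mul|exact: wf_mul].
apply: in_m_add; [rewrite (hm false) // | rewrite (hm true) //];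
  (apply: in_m_add; [apply: in_m_term => //; exact: hw | apply: in_m_scale; apply: in_m_mul_lin => //; exact: hgen]).
Qed.

Lemma D_in_m f : in_m f -> in_m (D f).
Proof.
case: hD => hw [ha _] [s [hs ->]]; elim: s hs => [|x s IH] hs /=.
  rewrite D_zero; exact: in_m_zero.
inversion hs; subst; case: H1 => h1 h2.
have wr : wf (sym_sum [seq sym_mul c.1 c.2 | c <- s]).
  apply: wf_sum; elim: s H2 {IH hs} => [|y s IH'] H /=; first by constructor.
  inversion H as [|y' s' Hy Hs]; subst; constructor; last exact: IH'.
  case: Hy => ??; apply: wf_mul => //; exact: wf_gen.
rewrite ha //; last by apply: wf_mul => //; exact: wf_gen.
apply: in_m_add; [exact: D_term | exact: IH].
Qed.

End Der.


Lemma sum_delta0 N l (F : nat -> C) :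
  \sum_(0 <= j < N) ((j == l)%:R * F j) = (l < N)%:R * F l.
Proof.
elim: N => [|N IH]; first by rewrite big_geq // mul0r.
rewrite big_nat_recr //= IH; case: (ltngtP l N) => h.
- have -> : (l < N.+1)%N = true by lia.
  by rewrite mul0r addr0.
- have -> : (l < N.+1)%N = false by lia.
  by rewrite !mul0r addr0.
- by rewrite h ltnSn mul0r add0r.
Qed.

Lemma sum_delta N l (F : nat -> C) : ((N <= l)%N -> F l = 0) ->
  \sum_(0 <= j < N) ((j == l)%:R * F j) = F l.
Proof.
move=> h; rewrite sum_delta0; case: (ltnP l N) => hl; first by rewrite mul1r.
by rewrite mul0r h.
Qed.

Lemma sum2_zero N (F : nat -> nat -> C) : (forall i j, F i j = 0) ->
  \sum_(0 <= i < N) \sum_(0 <= j < N) F i j = 0.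
Proof. by move=> h; rewrite big1 // => i _; rewrite big1. Qed.

Lemma iota_lin (zeta : C) (t : tens R) N :
  (forall i j, (N <= i)%N || (N <= j)%N ->
     t ((false, i), (false, j)) = 0 /\ t ((false, i), (true, j)) = 0) ->
  \sum_(0 <= i < N) t ((false, i), (false, i)) = 0 ->
  lin_m (iotaU zeta t).
Proof.
move=> hfin htr.
pose c i j := t ((false, i), (false, j)) / (1 + zeta).
pose d i j := t ((false, i), (true, j)) / (1 + zeta).
pose P := [seq (i, j) | i <- index_iota 0 N, j <- index_iota 0 N].
exists ([seq (c p.1 p.2, sym_add (X R p.1 p.2) (sym_scale (- (p.1 == p.2)%:R) sym_one)) | p <- P]
     ++ [seq (d p.1 p.2, Y R p.1 p.2) | p <- P]).
split.
  apply: Forall_cat; apply: Forall_mapP => x /=; [left|right]; by exists x.1, x.2.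
apply: functional_extensionality => m.
rewrite sym_sum_eval map_cat big_cat !big_map !big_allpairs /=.
rewrite /sym_scale /sym_add /X /Y /sym_one.
have fc : forall i j, (N <= i)%N || (N <= j)%N -> c i j = 0.
  by move=> i j h; rewrite /c (hfin i j h).1 mul0r.
have fd : forall i j, (N <= i)%N || (N <= j)%N -> d i j = 0.
  by move=> i j h; rewrite /d (hfin i j h).2 mul0r.
case: m => [[|e1 [|e2 E]] [|o1 [|o2 O]]]; rewrite /=.
- rewrite [Z in _ = _ + Z]sum2_zero ?addr0; last by move=> i j; rewrite mulr0.
  rewrite (eq_bigr (fun i => - c i i)); last first.
    move=> i _; rewrite -(@sum_delta N i (fun j => - c i j)); last by move=> h; rewrite fc ?h ?oppr0.
    apply: eq_bigr => j _; rewrite add0r mulr1 eq_sym; by rewrite !mulrN mulrC.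
  by rewrite sumrN /c -mulr_suml htr mul0r oppr0.
- rewrite sum2_zero ?add0r; last by move=> i j; rewrite mulr0 addr0 mulr0.
  case: o1 => k0 l0 /=; rewrite -/(d k0 l0).
  rewrite -(@sum_delta N k0 (fun i => d i l0)); last by move=> h; rewrite fd ?h.
  apply: eq_bigr => i _.
  rewrite -(@sum_delta N l0 (fun j => (i == k0)%:R * d i j)); last by move=> h; rewrite fd ?h ?orbT ?mulr0.
  apply: eq_bigr => j _; rewrite !xpair_eqE !eqseq_cons /= !andbT !xpair_eqE [k0 == i]eq_sym [l0 == j]eq_sym.
  by case: (i == k0); case: (j == l0); rewrite /= ?mulr0 ?mul0r ?mul1r ?mulr1.
- by rewrite !sum2_zero ?addr0 // => i j; rewrite ?mulr0 ?addr0 ?xpair_eqE ?eqseq_cons /= ?andbF ?mulr0.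
- rewrite [Z in _ = _ + Z]sum2_zero ?addr0; last by move=> i j; rewrite mulr0.
  case: e1 => k0 l0 /=; rewrite -/(c k0 l0).
  rewrite -(@sum_delta N k0 (fun i => c i l0)); last by move=> h; rewrite fc ?h.
  apply: eq_bigr => i _.
  rewrite -(@sum_delta N l0 (fun j => (i == k0)%:R * c i j)); last by move=> h; rewrite fc ?h ?orbT ?mulr0.
  apply: eq_bigr => j _; rewrite mulr0 addr0 !xpair_eqE !eqseq_cons /= !andbT !xpair_eqE [k0 == i]eq_sym [l0 == j]eq_sym.
  by case: (i == k0); case: (j == l0); rewrite /= ?mulr0 ?mul0r ?mul1r ?mulr1.
all: by rewrite !sum2_zero ?addr0 // => i j; rewrite ?mulr0 ?addr0 ?xpair_eqE ?eqseq_cons /= ?andbF ?mulr0.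
Qed.

End Helpers.

Section S.
Variable R : realType.
Local Notation C := (R[i]).
Variable zeta : C.

Lemma tV_FF (g1 g2 : qelt R) k l i j : actV zeta g1 g2 k l ((false,i),(false,j)) =
  (1 + zeta) * ((j == l)%:R * g1.1 i k + (i == k)%:R * g2.1 j l).
Proof. rewrite /actV /actB /qM /= !xpair_eqE /=; ring. Qed.
Lemma tV_FT (g1 g2 : qelt R) k l i j : actV zeta g1 g2 k l ((false,i),(true,j)) =
  (1 + zeta) * ((i == k)%:R * - g2.2 j l) + (1 - zeta) * ((j == l)%:R * g1.2 i k).
Proof. rewrite /actV /actB /qM /= !xpair_eqE /=; ring. Qed.
Lemma tW_FF (g1 g2 : qelt R) k l i j : actW zeta g1 g2 k l ((false,i),(false,j)) =
  (1 + zeta) * ((i == k)%:R * g2.2 j l) + (1 - zeta) * ((j == l)%:R * g1.2 i k).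
Proof. rewrite /actW /actB /qM /= !xpair_eqE /=; ring. Qed.
Lemma tW_FT (g1 g2 : qelt R) k l i j : actW zeta g1 g2 k l ((false,i),(true,j)) =
  (1 + zeta) * ((j == l)%:R * g1.1 i k + (i == k)%:R * g2.1 j l).
Proof. rewrite /actW /actB /qM /= !xpair_eqE /=; ring. Qed.
End S.

Ltac kill a b haN hbN :=
  repeat match goal with
  | |- context [ (?x == ?y) ] => (have -> : (x == y) = false by lia)
  | |- context [ a ?x ?y ] => (rewrite (haN x y); last by lia)
  | |- context [ b ?x ?y ] => (rewrite (hbN x y); last by lia)
  end; rewrite /= ?mulr0 ?mul0r ?addr0 ?oppr0 ?mulr0 ?add0r //.

Theorem proposition4p3 (R : realType) (zeta : R[i]) (hzeta : zeta ^+ 2 = -1)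
  (a b : nat -> nat -> R[i]) (ha : finitary a) (hb : finitary b)
  (D0 D1 : Alg R -> Alg R)
  (hD0 : superder false D0)
  (hD1 : superder true D1)
  (hD0U : extends_on_U zeta (qeven (tau zeta (a, b))) (qeven (a, b)) D0)
  (hD1U : extends_on_U zeta (qodd (tau zeta (a, b))) (qodd (a, b)) D1) :
  forall f : Alg R, in_m f -> in_m (sym_add (D0 f) (D1 f)).
Proof.
case: ha => Na haN; case: hb => Nb hbN.
have getN : forall k l : nat, exists N, [/\ (Na <= N)%N, (Nb <= N)%N, (k < N)%N & (l < N)%N].
  move=> k l; exists (maxn (maxn Na Nb) (maxn k.+1 l.+1)); split; lia.
have nope : forall (N l : nat) (x : R[i]), (l < N)%N -> (N <= l)%N -> x = 0.
  move=> N l x h1 h2; exfalso; lia.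
have hX0 : forall k l, lin_m (D0 (X R k l)).
  move=> k l; have [N [h1 h2 h3 h4]] := getN k l.
  rewrite (hD0U k l).1; apply: (@iota_lin _ _ _ N).
    move=> i j hij; rewrite tV_FF tV_FT /=; split; case/orP: hij => h; kill a b haN hbN.
  rewrite (eq_bigr (fun i => (1+zeta) * ((i == l)%:R * - a k i + (i == k)%:R * a i l))); last first.
    by move=> i _; rewrite tV_FF.
  rewrite -mulr_sumr big_split /= !sum_delta ?addNr ?mulr0 //; exact: nope.
have hY0 : forall k l, lin_m (D0 (Y R k l)).
  move=> k l; have [N [h1 h2 h3 h4]] := getN k l.
  rewrite (hD0U k l).2; apply: (@iota_lin _ _ _ N).
    move=> i j hij; rewrite tW_FF tW_FT /=; split; case/orP: hij => h; kill a b haN hbN.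
  by rewrite big1 // => i _; rewrite tW_FF /= !mulr0 addr0.
have hX1 : forall k l, lin_m (D1 (X R k l)).
  move=> k l; have [N [h1 h2 h3 h4]] := getN k l.
  rewrite (hD1U k l).1; apply: (@iota_lin _ _ _ N).
    move=> i j hij; rewrite tV_FF tV_FT /=; split; case/orP: hij => h; kill a b haN hbN.
  by rewrite big1 // => i _; rewrite tV_FF /= !mulr0 addr0 mulr0.
have hY1 : forall k l, lin_m (D1 (Y R k l)).
  move=> k l; have [N [h1 h2 h3 h4]] := getN k l.
  rewrite (hD1U k l).2; apply: (@iota_lin _ _ _ N).
    move=> i j hij; rewrite tW_FF tW_FT /=; split; case/orP: hij => h; kill a b haN hbN.
  rewrite (eq_bigr (fun i => (1+zeta) * ((i == k)%:R * b i l) + (1 - zeta) * ((i == l)%:R * - (zeta * b k i)))); last first.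
    by move=> i _; rewrite tW_FF.
  rewrite big_split /= -!mulr_sumr !sum_delta; try exact: nope.
  have -> : (1 + zeta) * b k l + (1 - zeta) * - (zeta * b k l) = b k l * (1 + zeta ^+ 2) by ring.
  by rewrite hzeta addrN mulr0.
move=> f hf; apply: in_m_add.
  apply: (D_in_m hD0) => //; exact: (lin_gen hD0).
apply: (D_in_m hD1) => //; exact: (lin_gen hD1).
Qed.
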